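(* Let $\mathbb{C}$ be a category of interest and $A\in\mathbb{C}$. Then $\mathfrak{B}(A)$ is an object of $\mathbb{C}_G$.
   Context: Category of interest. A category of groups with operations is a variety of universal algebras with a set of operations $\Omega=\Omega_0\cup\Omega_1\cup\Omega_2$ ($\Omega_i$ = set of $i$-ary operations) and a set of identities $\mathbb{E}$ such that: $\mathbb{E}$ contains the group laws; the group operations, written additively $0,-,+$ (addition not necessarily commutative), lie in $\Omega_0,\Omega_1,\Omega_2$ respectively, and $\Omega_0=\{0\}$; putting $\Omega_2'=\Omega_2\setminus\{+\}$ and $\Omega_1'=\Omega_1\setminus\{-\}$, whenever $*\in\Omega_2'$ also $*^\circ\in\Omega_2'$, where $x*^\circ y=y*x$; $\mathbb{E}$ contains $x*(y+z)=x*y+x*z$ for each $*\in\Omega_2'$, and $\omega(x+y)=\omega(x)+\omega(y)$, $\omega(x)*y=\omega(x*y)$ for each $\omega\in\Omega_1'$, $*\in\Omega_2'$. A category of interest $\mathbb{C}=(\Omega,\mathbb{E})$ is such a variety which also satisfies: (Axiom 1) $x_1+(x_2*x_3)=(x_2*x_3)+x_1$ for each $*\in\Omega_2'$; (Axiom 2) for each ordered pair $( *,\bar* )\in\Omega_2'\times\Omega_2'$ there is a word $W$ with $(x_1*x_2)\bar*x_3=W\big(x_1(x_2x_3),x_1(x_3x_2),(x_2x_3)x_1,(x_3x_2)x_1,x_2(x_1x_3),x_2(x_3x_1),(x_1x_3)x_2,(x_3x_1)x_2\big)$, each juxtaposition standing for some operation in $\Omega_2'$; the right-hand side is denoted $W(x_1,x_2;x_3;*,\bar*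 )$. Let $\mathbb{E}_G\subseteq\mathbb{E}$ consist of the group laws together with the identities $x*(y+z)=x*y+x*z$, $\omega(x+y)=\omega(x)+\omega(y)$, $\omega(x)*y=\omega(x*y)$, and let $\mathbb{C}_G$ be the variety $(\Omega,\mathbb{E}_G)$. Derived actions. For objects $A,B$ of $\mathbb{C}$, a split extension $0\to A\to E\xrightarrow{p}B\to 0$ in $\mathbb{C}$ ($p$ surjective with kernel $A$, and a morphism $s$ with $ps=1_B$) induces actions $b\cdot a=s(b)+a-s(b)$ and $b*a=s(b)*a$ ($*\in\Omega_2'$); these are called derived actions of $B$ on $A$ in $\mathbb{C}$ (one writes $a*b:=b*^\circ a$). The object $\mathfrak{B}(A)$. Fix $A\in\mathbb{C}$ and let $(B_j)_{j\in J}$ range over all objects of $\mathbb{C}$ equipped with a derived action on $A$ in $\mathbb{C}$ (one index for each split extension of $A$ in $\mathbb{C}$). Consider families $x$ of maps $A\to A$ consisting of a map $a\mapsto x\cdot a$ and maps $a\mapsto x*a$ ($*\in\Omega_2'$). For $b\in B_j$ let $\mathbf{b}$ be the family $a\mapsto b\cdot a$, $a\mapsto b*a$, and let $\mathbb{B}$ be the set of all such $\mathbf b$. Operations on families: for $\mathbf{b}_i,\mathbf{b}_k\in\mathbb{B}$ and $*\in\Omega_2'$, $(\mathbf b_i*\mathbf b_k)\cdot a=a$ and $(\mathbf b_i*\mathbf b_k)\bar*a=W(b_i,b_k;a;*,\bar* )$ for $\bar*\in\Omega_2'$ (the Axiom 2 word evaluated through the given actions), iterated products being defined inductively in the same way via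 Axiom 2; $(x+y)\cdot a=x\cdot(y\cdot a)$ and $(x+y)*a=x*a+y*a$; for $\omega\in\Omega_1'$, $\omega(\mathbf b_k)$ is the family of $\omega(b_k)$, $\omega(x*y)=\omega(x)*y$, and $\omega$ is additive; $(-\mathbf b_k)\cdot a=(-b_k)\cdot a$, $(-x)*a=-(x*a)$, $(-x)\cdot a=a$ when $x$ is a product, and $-(x_1+\dots+x_n)=-x_n-\dots-x_1$. $\mathfrak{B}(A)$ is the set of all families obtained from $\mathbb{B}$ by iterating these operations, modulo the equivalence $x\sim y$ iff $x\cdot a=y\cdot a$, $x*a=y*a$ and $(\omega_1\cdots\omega_n x)\cdot a=(\omega_1\cdots\omega_n y)\cdot a$ for all $a\in A$, $*\in\Omega_2'$, $n\ge1$, $\omega_1,\dots,\omega_n\in\Omega_1'$; it is an $\Omega$-algebra with these operations. *)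

(* Defs.v *)
From Stdlib Require Import List.
Import ListNotations.
Set Implicit Arguments.

(** * Signatures of groups with operations
    Omega_0 = {0}; Omega_1 = {-} + O1 (O1 = Omega_1');
    Omega_2 = {+} + O2 (O2 = Omega_2'); [circ o] is the symbol o° of O2. *)
Record signature := Signature { O1 : Type; O2 : Type; circ : O2 -> O2 }.
Arguments circ {s}.

Inductive term (S : signature) : Type :=
| var : nat -> term S
| tzero : term S
| tneg : term S -> term S
| tadd : term S -> term S -> term S
| tun : O1 S -> term S -> term S
| tbin : O2 S -> term S -> term S -> term S.
Arguments var {S}. Arguments tzero {S}. Arguments tneg {S}. Arguments tadd {S}. Arguments tun {S}. Arguments tbin {S}.

Record alg (S : signature) := Alg {
  car :> Type;
  azero : car;
  aneg : car -> car;
  aadd : car -> car -> car;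
  aun : O1 S -> car -> car;
  abin : O2 S -> car -> car -> car }.

Fixpoint teval S (X : alg S) (v : nat -> car X) (t : term S) : car X :=
  match t with
  | var n => v n
  | tzero => azero X
  | tneg t => aneg X (teval X v t)
  | tadd t u => aadd X (teval X v t) (teval X v u)
  | tun w t => aun X w (teval X v t)
  | tbin o t u => abin X o (teval X v t) (teval X v u)
  end.

Definition identity (S : signature) := (term S * term S)%type.
Definition satisfies S (X : alg S) (e : identity S) : Prop :=
  forall v : nat -> car X, teval X v (fst e) = teval X v (snd e).
Definition is_model S (Eq : identity S -> Prop) (X : alg S) : Prop :=
  forall e, Eq e -> satisfies X e.

Definition vx {S} : term S := var 0.
Definition vy {S} : term S := var 1.
Definition vz {S} : term S := var 2.

Inductive EG_ids (S : signature) : identity S -> Prop :=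
| eg_assoc : EG_ids (tadd (tadd vx vy) vz, tadd vx (tadd vy vz))
| eg_zero_r : EG_ids (tadd vx tzero, vx)
| eg_zero_l : EG_ids (tadd tzero vx, vx)
| eg_inv_r : EG_ids (tadd vx (tneg vx), tzero)
| eg_inv_l : EG_ids (tadd (tneg vx) vx, tzero)
| eg_distr (o : O2 S) : EG_ids (tbin o vx (tadd vy vz), tadd (tbin o vx vy) (tbin o vx vz))
| eg_un_add (w : O1 S) : EG_ids (tun w (tadd vx vy), tadd (tun w vx) (tun w vy))
| eg_un_bin (w : O1 S) (o : O2 S) : EG_ids (tbin o (tun w vx) vy, tun w (tbin o vx vy)).

(** * Axiom 2 words.
    The eight admissible subterms (x_i juxtaposed with a product), each with
    its outer operation o and inner operation o'. *)
Inductive wshape : Type :=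
| W_1_23 | W_1_32
| W_23_1 | W_32_1
| W_2_13 | W_2_31
| W_13_2 | W_31_2 .

Inductive wword (S : signature) : Type :=
| wzero : wword S
| wneg : wword S -> wword S
| wadd : wword S -> wword S -> wword S
| wleaf : wshape -> O2 S -> O2 S -> wword S.
Arguments wzero {S}. Arguments wneg {S}. Arguments wadd {S}. Arguments wleaf {S}.

Fixpoint weval_alg S (X : alg S) (a b c : car X) (w : wword S) : car X :=
  match w with
  | wzero => azero X
  | wneg w => aneg X (weval_alg X a b c w)
  | wadd w1 w2 => aadd X (weval_alg X a b c w1) (weval_alg X a b c w2)
  | wleaf sh o o' =>
      match sh with
      | W_1_23 => abin X o a (abin X o' b c)
      | W_1_32 => abin X o a (abin X o' c b)
      | W_23_1 => abin X o (abin X o' b c) a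
      | W_32_1 => abin X o (abin X o' c b) a
      | W_2_13 => abin X o b (abin X o' a c)
      | W_2_31 => abin X o b (abin X o' c a)
      | W_13_2 => abin X o (abin X o' a c) b
      | W_31_2 => abin X o (abin X o' c a) b
      end
  end.

(** Evaluation W(x,y;a;*,*bar) "through the actions": x and y are given by
    their star-actions  sx o a = x o a ; a o x := x o° a. *)
Fixpoint weval_act S (A : alg S) (sx sy : O2 S -> car A -> car A) (a : car A)
    (w : wword S) : car A :=
  match w with
  | wzero => azero A
  | wneg w => aneg A (weval_act A sx sy a w)
  | wadd w1 w2 => aadd A (weval_act A sx sy a w1) (weval_act A sx sy a w2)
  | wleaf sh o o' =>
      match sh with
      | W_1_23 => sx o (sy o' a)
      | W_1_32 => sx o (sy (circ o') a)
      | W_23_1 => sx (circ o) (sy o' a)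
      | W_32_1 => sx (circ o) (sy (circ o') a)
      | W_2_13 => sy o (sx o' a)
      | W_2_31 => sy o (sx (circ o') a)
      | W_13_2 => sy (circ o) (sx o' a)
      | W_31_2 => sy (circ o) (sx (circ o') a)
      end
  end.

(** * Categories of interest (with a fixed choice of the Axiom 2 words). *)
Record coi (S : signature) := CoI {
  ceq : identity S -> Prop;
  ceq_G : forall e, EG_ids e -> ceq e;
  ceq_circ : forall o : O2 S, ceq (tbin (circ o) vx vy, tbin o vy vx);
  cW : O2 S -> O2 S -> wword S;
  axiom1 : forall X : alg S, is_model ceq X ->
    forall (o : O2 S) (a b c : car X), aadd X a (abin X o b c) = aadd X (abin X o b c) a;
  axiom2 : forall X : alg S, is_model ceq X ->
    forall (o o' : O2 S) (a b c : car X),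
      abin X o' (abin X o a b) c = weval_alg X a b c (cW o o') }.

Record is_hom S (X Y : alg S) (f : car X -> car Y) : Prop := {
  hom0 : f (azero X) = azero Y;
  homN : forall a, f (aneg X a) = aneg Y (f a);
  homD : forall a b, f (aadd X a b) = aadd Y (f a) (f b);
  homU : forall w a, f (aun X w a) = aun Y w (f a);
  homB : forall o a b, f (abin X o a b) = abin Y o (f a) (f b) }.

(** * Split extensions 0 -> A -i-> E -p-> B -> 0 in C with section s,
    together with the induced derived action of B on A
    (act_dot b a = s(b)+a-s(b), act_star o b a = s(b) o a, read in A via i;
    these are uniquely determined since i is injective). *)
Record splitext S (C : coi S) (A : alg S) := SplitExt {
  sE : alg S;
  sB : alg S;
  sE_C : is_model (ceq C) sE;
  sB_C : is_model (ceq C) sB;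
  sp : car sE -> car sB;
  sp_hom : is_hom sE sB sp;
  sp_surj : forall b, exists e, sp e = b;
  ss : car sB -> car sE;
  ss_hom : is_hom sB sE ss;
  ss_sect : forall b, sp (ss b) = b;
  si : car A -> car sE;
  si_hom : is_hom A sE si;
  si_inj : forall a a', si a = si a' -> a = a';
  si_ker : forall e, sp e = azero sB <-> exists a, e = si a;
  act_dot : car sB -> car A -> car A;
  act_dot_spec : forall b a,
    si (act_dot b a) = aadd sE (aadd sE (ss b) (si a)) (aneg sE (ss b));
  act_star : O2 S -> car sB -> car A -> car A;
  act_star_spec : forall o b a, si (act_star o b a) = abin sE o (ss b) (si a) }.

(** * The object B(A): formal expressions built from the families b
    (b in B_j, j ranging over all split extensions of A) by the operations. *)
Inductive bexpr S (C : coi S) (A : alg S) : Type :=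
| bgen (X : splitext C A) (b : car (sB X)) : bexpr C A
| bzero : bexpr C A
| bneg : bexpr C A -> bexpr C A
| badd : bexpr C A -> bexpr C A -> bexpr C A
| bun : O1 S -> bexpr C A -> bexpr C A
| bbin : O2 S -> bexpr C A -> bexpr C A -> bexpr C A.
Arguments bzero {S C A}. Arguments bgen {S C A}. Arguments bneg {S C A}. Arguments badd {S C A}. Arguments bun {S C A}. Arguments bbin {S C A}.

Fixpoint chain S (X : alg S) (ws : list (O1 S)) (b : car X) : car X :=
  match ws with
  | [] => b
  | w :: ws => aun X w (chain X ws b)
  end.

(** ddot ws sg x a = ((±) w1 ... wn x) . a  (sign - iff sg = true),
    following: (-b).a for generators, (-x).a = a for products,
    -(x1+...+xn) = -xn-...-x1, (x+y).a = x.(y.a), omega additive,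
    omega(x*y) = omega(x)*y. *)
Fixpoint ddot S (C : coi S) (A : alg S) (ws : list (O1 S)) (sg : bool)
    (x : bexpr C A) {struct x} : car A -> car A :=
  match x with
  | bgen X b => act_dot X (if sg then aneg (sB X) (chain (sB X) ws b)
                                 else chain (sB X) ws b)
  | bzero => fun a => a
  | bneg x => ddot ws (negb sg) x
  | badd x y => if sg then fun a => ddot ws true y (ddot ws true x a)
                else fun a => ddot ws false x (ddot ws false y a)
  | bun w x => ddot (ws ++ [w]) sg x
  | bbin _ _ _ => fun a => a
  end.

(** dstar ws x o a = (w1 ... wn x) o a ;
    (x*y) *bar a = W(x,y;a;*,*bar), (x+y)*a = x*a+y*a, (-x)*a = -(x*a). *)
Fixpoint dstar S (C : coi S) (A : alg S) (ws : list (O1 S))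
    (x : bexpr C A) {struct x} : O2 S -> car A -> car A :=
  match x with
  | bgen X b => fun o a => act_star X o (chain (sB X) ws b) a
  | bzero => fun _ _ => azero A
  | bneg x => fun o a => aneg A (dstar ws x o a)
  | badd x y => fun o a => aadd A (dstar ws x o a) (dstar ws y o a)
  | bun w x => dstar (ws ++ [w]) x
  | bbin o x y => fun o' a => weval_act A (dstar ws x) (dstar [] y) a (cW C o o')
  end.

(** The equivalence x ~ y defining B(A): x.a = y.a, x*a = y*a and
    (w1...wn x).a = (w1...wn y).a for all a, *, n >= 1, w_i. *)
Definition bequiv S (C : coi S) (A : alg S) (x y : bexpr C A) : Prop :=
  (forall (ws : list (O1 S)) (a : car A), ddot ws false x a = ddot ws false y a) /\
  (forall (o : O2 S) (a : car A), dstar [] x o a = dstar [] y o a).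

(** ~ is compatible with the operations (B(A) is an Omega-algebra). *)
Definition bcongruence S (C : coi S) (A : alg S) : Prop :=
  (forall x x' : bexpr C A, bequiv x x' ->
     bequiv (bneg x) (bneg x') /\ forall w, bequiv (bun w x) (bun w x')) /\
  (forall x x' y y' : bexpr C A, bequiv x x' -> bequiv y y' ->
     bequiv (badd x y) (badd x' y') /\ forall o, bequiv (bbin o x y) (bbin o x' y')).

Fixpoint bsubst S (C : coi S) (A : alg S) (v : nat -> bexpr C A) (t : term S)
    : bexpr C A :=
  match t with
  | var n => v n
  | tzero => bzero
  | tneg t => bneg (bsubst v t)
  | tadd t u => badd (bsubst v t) (bsubst v u)
  | tun w t => bun w (bsubst v t)
  | tbin o t u => bbin o (bsubst v t) (bsubst v u)
  end.

(** B(A) (= bexpr C A / bequiv) satisfies the identity e. *)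
Definition B_satisfies S (C : coi S) (A : alg S) (e : identity S) : Prop :=
  forall v : nat -> bexpr C A, bequiv (bsubst v (fst e)) (bsubst v (snd e)).

(* Main.v *)
Require Import Defs.
From Stdlib Require Import List.
Import ListNotations.

Definition val3 {S} {X : alg S} (a b c : car X) : nat -> car X :=
  fun n => match n with 0 => a | 1 => b | _ => c end.

Lemma gA {S} {C : coi S} {X : alg S} (HX : is_model (ceq C) X) a b c :
  aadd X (aadd X a b) c = aadd X a (aadd X b c).
Proof. exact (HX _ (ceq_G C (@eg_assoc S)) (val3 a b c)). Qed.
Lemma g0r {S} {C : coi S} {X : alg S} (HX : is_model (ceq C) X) a :
  aadd X a (azero X) = a.
Proof. exact (HX _ (ceq_G C (@eg_zero_r S)) (val3 a a a)). Qed.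
Lemma g0l {S} {C : coi S} {X : alg S} (HX : is_model (ceq C) X) a :
  aadd X (azero X) a = a.
Proof. exact (HX _ (ceq_G C (@eg_zero_l S)) (val3 a a a)). Qed.
Lemma gNr {S} {C : coi S} {X : alg S} (HX : is_model (ceq C) X) a :
  aadd X a (aneg X a) = azero X.
Proof. exact (HX _ (ceq_G C (@eg_inv_r S)) (val3 a a a)). Qed.
Lemma gNl {S} {C : coi S} {X : alg S} (HX : is_model (ceq C) X) a :
  aadd X (aneg X a) a = azero X.
Proof. exact (HX _ (ceq_G C (@eg_inv_l S)) (val3 a a a)). Qed.
Lemma gD {S} {C : coi S} {X : alg S} (HX : is_model (ceq C) X) o a b c :
  abin X o a (aadd X b c) = aadd X (abin X o a b) (abin X o a c).
Proof. exact (HX _ (ceq_G C (@eg_distr S o)) (val3 a b c)). Qed.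
Lemma gUD {S} {C : coi S} {X : alg S} (HX : is_model (ceq C) X) w a b :
  aun X w (aadd X a b) = aadd X (aun X w a) (aun X w b).
Proof. exact (HX _ (ceq_G C (@eg_un_add S w)) (val3 a b b)). Qed.
Lemma gUB {S} {C : coi S} {X : alg S} (HX : is_model (ceq C) X) w o a b :
  abin X o (aun X w a) b = aun X w (abin X o a b).
Proof. exact (HX _ (ceq_G C (@eg_un_bin S w o)) (val3 a b b)). Qed.
Lemma gC {S} {C : coi S} {X : alg S} (HX : is_model (ceq C) X) o a b :
  abin X (circ o) a b = abin X o b a.
Proof. exact (HX _ (ceq_circ C o) (val3 a b b)). Qed.

Lemma gNu {S} {C : coi S} {X : alg S} (HX : is_model (ceq C) X) a b :
  aadd X a b = azero X -> b = aneg X a.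
Proof.
  intro H. rewrite <- (g0l HX b), <- (gNl HX a), (gA HX), H, (g0r HX). reflexivity.
Qed.
Lemma gNN {S} {C : coi S} {X : alg S} (HX : is_model (ceq C) X) a :
  aneg X (aneg X a) = a.
Proof. symmetry. apply (gNu HX). apply (gNl HX). Qed.
Lemma gND {S} {C : coi S} {X : alg S} (HX : is_model (ceq C) X) a b :
  aneg X (aadd X a b) = aadd X (aneg X b) (aneg X a).
Proof.
  symmetry. apply (gNu HX).
  rewrite (gA HX), <- (gA HX b), (gNr HX), (g0l HX), (gNr HX). reflexivity.
Qed.
Lemma gcancel {S} {C : coi S} {X : alg S} (HX : is_model (ceq C) X) a b c :
  aadd X a b = aadd X a c -> b = c.
Proof.
  intro H. rewrite <- (g0l HX b), <- (g0l HX c), <- (gNl HX a), !(gA HX), H. reflexivity.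
Qed.
Lemma gU0 {S} {C : coi S} {X : alg S} (HX : is_model (ceq C) X) w :
  aun X w (azero X) = azero X.
Proof.
  apply (gcancel HX (aun X w (azero X))). rewrite <- (gUD HX), !(g0r HX). reflexivity.
Qed.
Lemma gUN {S} {C : coi S} {X : alg S} (HX : is_model (ceq C) X) w a :
  aun X w (aneg X a) = aneg X (aun X w a).
Proof. apply (gNu HX). rewrite <- (gUD HX), (gNr HX), (gU0 HX). reflexivity. Qed.
Lemma gB0 {S} {C : coi S} {X : alg S} (HX : is_model (ceq C) X) o a :
  abin X o a (azero X) = azero X.
Proof.
  apply (gcancel HX (abin X o a (azero X))). rewrite <- (gD HX), !(g0r HX). reflexivity.
Qed.
Lemma gBN {S} {C : coi S} {X : alg S} (HX : is_model (ceq C) X) o a b :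
  abin X o a (aneg X b) = aneg X (abin X o a b).
Proof. apply (gNu HX). rewrite <- (gD HX), (gNr HX), (gB0 HX). reflexivity. Qed.

Definition central {S} (X : alg S) (p : car X) := forall u, aadd X u p = aadd X p u.

Lemma cen0 {S} {C : coi S} {X : alg S} (HX : is_model (ceq C) X) : central X (azero X).
Proof. intro u. rewrite (g0r HX), (g0l HX). reflexivity. Qed.
Lemma cenN {S} {C : coi S} {X : alg S} (HX : is_model (ceq C) X) p :
  central X p -> central X (aneg X p).
Proof.
  intros H u.
  rewrite <- (g0l HX (aadd X u (aneg X p))), <- (gNl HX p), (gA HX), <- (gA HX p),
    <- H, !(gA HX), (gNr HX), (g0r HX). reflexivity.
Qed.
Lemma cenD {S} {C : coi S} {X : alg S} (HX : is_model (ceq C) X) p q :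
  central X p -> central X q -> central X (aadd X p q).
Proof.
  intros Hp Hq u. rewrite <- (gA HX), Hp, (gA HX), Hq, (gA HX). reflexivity.
Qed.
Lemma gswap {S} {C : coi S} {X : alg S} (HX : is_model (ceq C) X) p q p' q' :
  central X q ->
  aadd X (aadd X p q) (aadd X p' q') = aadd X (aadd X p p') (aadd X q q').
Proof.
  intro Hq. rewrite !(gA HX). f_equal. rewrite <- !(gA HX). f_equal. symmetry. apply Hq.
Qed.
Lemma gNDc {S} {C : coi S} {X : alg S} (HX : is_model (ceq C) X) p q :
  central X p -> aneg X (aadd X p q) = aadd X (aneg X p) (aneg X q).
Proof. intro H. rewrite (gND HX). apply (cenN HX). exact H. Qed.

Lemma conj_inv1 {S} {C : coi S} {X : alg S} (HX : is_model (ceq C) X) x u :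
  aadd X (aadd X (aneg X x) (aadd X (aadd X x u) (aneg X x))) (aneg X (aneg X x)) = u.
Proof.
  rewrite (gNN HX), !(gA HX), (gNl HX), (g0r HX), <- (gA HX), (gNl HX), (g0l HX). reflexivity.
Qed.
Lemma conj_inv2 {S} {C : coi S} {X : alg S} (HX : is_model (ceq C) X) x u :
  aadd X (aadd X x (aadd X (aadd X (aneg X x) u) (aneg X (aneg X x)))) (aneg X x) = u.
Proof.
  rewrite (gNN HX), !(gA HX), (gNr HX), (g0r HX), <- (gA HX), (gNr HX), (g0l HX). reflexivity.
Qed.

Lemma ddot_inv {S} {C : coi S} {A : alg S} (HA : is_model (ceq C) A) (x : bexpr C A) :
  forall ws sg a, ddot ws (negb sg) x (ddot ws sg x a) = a.
Proof.
  induction x as [X b| |x IH|x IHx y IHy|w x IH|o x IHx y IHy]; intros ws sg a; simpl.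
  - apply (si_inj X). destruct sg; simpl; rewrite !(act_dot_spec X), !(homN (ss_hom X)).
    + apply (conj_inv2 (sE_C X)).
    + apply (conj_inv1 (sE_C X)).
  - reflexivity.
  - apply IH.
  - destruct sg; simpl.
    + pose proof (IHx ws true) as Hx; pose proof (IHy ws true) as Hy; simpl in Hx, Hy.
      rewrite Hy, Hx; reflexivity.
    + pose proof (IHx ws false) as Hx; pose proof (IHy ws false) as Hy; simpl in Hx, Hy.
      rewrite Hx, Hy; reflexivity.
  - apply IH.
  - reflexivity.
Qed.

Lemma weval_central {S} {C : coi S} {A : alg S} (HA : is_model (ceq C) A)
  (sx sy : O2 S -> car A -> car A) a W :
  (forall o c, central A (sx o c)) -> (forall o c, central A (sy o c)) ->
  central A (weval_act A sx sy a W).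
Proof.
  intros Hx Hy. induction W as [|W IH|W1 IH1 W2 IH2|sh o o']; simpl.
  - apply (cen0 HA).
  - apply (cenN HA); auto.
  - apply (cenD HA); auto.
  - destruct sh; auto.
Qed.

Lemma dstar_central {S} {C : coi S} {A : alg S} (HA : is_model (ceq C) A) (x : bexpr C A) :
  forall ws o a, central A (dstar ws x o a).
Proof.
  induction x as [X b| |x IH|x IHx y IHy|w x IH|o x IHx y IHy]; intros ws o0 a; simpl.
  - intro u. apply (si_inj X).
    rewrite !(homD (si_hom X)), !(act_star_spec X). apply (axiom1 C (sE_C X)).
  - apply (cen0 HA).
  - apply (cenN HA); auto.
  - apply (cenD HA); auto.
  - apply IH.
  - apply (weval_central HA); auto.
Qed.

Lemma weval_ext {S} {A : alg S} (sx sy sx' sy' : O2 S -> car A -> car A) a W :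
  (forall o c, sx o c = sx' o c) -> (forall o c, sy o c = sy' o c) ->
  weval_act A sx sy a W = weval_act A sx' sy' a W.
Proof.
  intros Hx Hy. induction W as [|W IH|W1 IH1 W2 IH2|sh o o']; simpl.
  - reflexivity.
  - rewrite IH; reflexivity.
  - rewrite IH1, IH2; reflexivity.
  - destruct sh; rewrite ?Hy, ?Hx, ?Hy; reflexivity.
Qed.

Definition addit {S} (A : alg S) (s : O2 S -> car A -> car A) :=
  forall o a a', s o (aadd A a a') = aadd A (s o a) (s o a').

Lemma weval_add {S} {C : coi S} {A : alg S} (HA : is_model (ceq C) A)
  (sx sy : O2 S -> car A -> car A) a a' W :
  (forall o c, central A (sx o c)) -> (forall o c, central A (sy o c)) ->
  addit A sx -> addit A sy ->
  weval_act A sx sy (aadd A a a') W = aadd A (weval_act A sx sy a W) (weval_act A sx sy a' W).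
Proof.
  intros Cx Cy Hx Hy. induction W as [|W IH|W1 IH1 W2 IH2|sh o o']; simpl.
  - rewrite (g0r HA); reflexivity.
  - rewrite IH. apply (gNDc HA). apply (weval_central HA); auto.
  - rewrite IH1, IH2. apply (gswap HA). apply (weval_central HA); auto.
  - destruct sh; rewrite ?Hy, ?Hx, ?Hy; reflexivity.
Qed.

Lemma dstar_add {S} {C : coi S} {A : alg S} (HA : is_model (ceq C) A) (x : bexpr C A) :
  forall ws, addit A (dstar ws x).
Proof.
  induction x as [X b| |x IH|x IHx y IHy|w x IH|o x IHx y IHy]; intros ws o0 a a'; simpl.
  - apply (si_inj X).
    rewrite !(homD (si_hom X)), !(act_star_spec X), (homD (si_hom X)). apply (gD (sE_C X)).
  - rewrite (g0r HA); reflexivity.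
  - rewrite IH. apply (gNDc HA). apply (dstar_central HA).
  - rewrite IHx, IHy. apply (gswap HA). apply (dstar_central HA).
  - apply IH.
  - apply (weval_add HA); auto; intros; apply (dstar_central HA).
Qed.

Lemma weval_distr {S} {C : coi S} {A : alg S} (HA : is_model (ceq C) A)
  (sx sy sz : O2 S -> car A -> car A) a W :
  (forall o c, central A (sy o c)) -> (forall o c, central A (sz o c)) ->
  (forall o c, central A (sx o c)) -> addit A sx ->
  weval_act A sx (fun o c => aadd A (sy o c) (sz o c)) a W
  = aadd A (weval_act A sx sy a W) (weval_act A sx sz a W).
Proof.
  intros Cy Cz Cx Hx. induction W as [|W IH|W1 IH1 W2 IH2|sh o o']; simpl.
  - rewrite (g0r HA); reflexivity.
  - rewrite IH. apply (gNDc HA). apply (weval_central HA); auto.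
  - rewrite IH1, IH2. apply (gswap HA). apply (weval_central HA); auto.
  - destruct sh; rewrite ?Hx; reflexivity.
Qed.

Definition ucomm {S} (A : alg S) (w : O1 S) (s : O2 S -> car A -> car A) :=
  forall o c, s o (aun A w c) = aun A w (s o c).

Lemma weval_un {S} {C : coi S} {A : alg S} (HA : is_model (ceq C) A)
  (sx sy : O2 S -> car A -> car A) w a W :
  ucomm A w sx -> ucomm A w sy ->
  weval_act A sx sy (aun A w a) W = aun A w (weval_act A sx sy a W).
Proof.
  intros Hx Hy. induction W as [|W IH|W1 IH1 W2 IH2|sh o o']; simpl.
  - rewrite (gU0 HA); reflexivity.
  - rewrite IH, (gUN HA); reflexivity.
  - rewrite IH1, IH2, (gUD HA); reflexivity.
  - destruct sh; rewrite ?Hy, ?Hx, ?Hy; reflexivity.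
Qed.

Lemma dstar_un {S} {C : coi S} {A : alg S} (HA : is_model (ceq C) A) (x : bexpr C A) :
  forall ws w, ucomm A w (dstar ws x).
Proof.
  induction x as [X b| |x IH|x IHx y IHy|w0 x IH|o x IHx y IHy]; intros ws w o0 c; simpl.
  - apply (si_inj X).
    rewrite !(homU (si_hom X)), !(act_star_spec X), (homU (si_hom X)).
    rewrite <- (gC (sE_C X)), (gUB (sE_C X)), (gC (sE_C X)). reflexivity.
  - rewrite (gU0 HA); reflexivity.
  - rewrite IH, (gUN HA); reflexivity.
  - rewrite IHx, IHy, (gUD HA); reflexivity.
  - apply IH.
  - apply (weval_un HA); auto.
Qed.

Lemma chain_app {S} (X : alg S) ws w c :
  chain X (ws ++ [w]) c = chain X ws (aun X w c).
Proof. induction ws; simpl; congruence. Qed.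

Lemma chain0 {S} {C : coi S} {X : alg S} (HX : is_model (ceq C) X) ws :
  chain X ws (azero X) = azero X.
Proof. induction ws; simpl; [reflexivity| rewrite IHws, (gU0 HX); reflexivity]. Qed.
Lemma chainN {S} {C : coi S} {X : alg S} (HX : is_model (ceq C) X) ws c :
  chain X ws (aneg X c) = aneg X (chain X ws c).
Proof. induction ws; simpl; [reflexivity| rewrite IHws, (gUN HX); reflexivity]. Qed.
Lemma chainD {S} {C : coi S} {X : alg S} (HX : is_model (ceq C) X) ws c d :
  chain X ws (aadd X c d) = aadd X (chain X ws c) (chain X ws d).
Proof. induction ws; simpl; [reflexivity| rewrite IHws, (gUD HX); reflexivity]. Qed.

Lemma dstar_chaincomm {S} {C : coi S} {A : alg S} (HA : is_model (ceq C) A) (y : bexpr C A) ws o c :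
  dstar [] y o (chain A ws c) = chain A ws (dstar [] y o c).
Proof.
  induction ws; simpl; [reflexivity|]. rewrite (dstar_un HA), IHws. reflexivity.
Qed.

Lemma weval_chain {S} {C : coi S} {A : alg S} (HA : is_model (ceq C) A)
  (sx sy : O2 S -> car A -> car A) ws a W :
  (forall o c, sy o (chain A ws c) = chain A ws (sy o c)) ->
  weval_act A (fun o c => chain A ws (sx o c)) sy a W = chain A ws (weval_act A sx sy a W).
Proof.
  intros Hy. induction W as [|W IH|W1 IH1 W2 IH2|sh o o']; simpl.
  - rewrite (chain0 HA); reflexivity.
  - rewrite IH, (chainN HA); reflexivity.
  - rewrite IH1, IH2, (chainD HA); reflexivity.
  - destruct sh; rewrite ?Hy; reflexivity.
Qed.

Lemma act_star_chain {S} {C : coi S} {A : alg S} (X : splitext C A) ws o b a :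
  act_star X o (chain (sB X) ws b) a = chain A ws (act_star X o b a).
Proof.
  induction ws; simpl; [reflexivity|].
  apply (si_inj X). rewrite (homU (si_hom X)), !(act_star_spec X), (homU (ss_hom X)),
    (gUB (sE_C X)), <- IHws, (act_star_spec X). reflexivity.
Qed.

Lemma dstar_chain {S} {C : coi S} {A : alg S} (HA : is_model (ceq C) A) (x : bexpr C A) :
  forall ws o a, dstar ws x o a = chain A ws (dstar [] x o a).
Proof.
  induction x as [X b| |x IH|x IHx y IHy|w x IH|o x IHx y IHy]; intros ws o0 a; simpl.
  - apply act_star_chain.
  - rewrite (chain0 HA); reflexivity.
  - rewrite IH, (chainN HA); reflexivity.
  - rewrite IHx, IHy, (chainD HA); reflexivity.
  - rewrite IH, (IH [w]), chain_app. reflexivity.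
  - rewrite <- (weval_chain HA).
    + apply weval_ext; auto.
    + intros; apply (dstar_chaincomm HA).
Qed.

Lemma ddot_true_ext {S} {C : coi S} {A : alg S} (HA : is_model (ceq C) A) (x x' : bexpr C A) ws :
  (forall a, ddot ws false x a = ddot ws false x' a) ->
  forall a, ddot ws true x a = ddot ws true x' a.
Proof.
  intros H a.
  pose proof (ddot_inv HA x' ws true a) as E1. simpl in E1.
  rewrite <- E1 at 1. rewrite <- H.
  exact (ddot_inv HA x ws false _).
Qed.

Theorem proposition3p1 (S : signature) (C : coi S) (A : alg S)
  (HA : is_model (ceq C) A) :
  bcongruence C A /\ (forall e : identity S, EG_ids e -> B_satisfies C A e).
Proof.
  split.
  - split.
    + intros x x' [H1 H2]. split.
      * split; intros; cbn.
        -- apply (ddot_true_ext HA). intros; apply H1.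
        -- rewrite H2; reflexivity.
      * intro w. split; intros; cbn.
        -- apply H1.
        -- rewrite (dstar_chain HA x [w]), (dstar_chain HA x' [w]), H2. reflexivity.
    + intros x x' y y' [Hx1 Hx2] [Hy1 Hy2]. split.
      * split; intros; cbn.
        -- rewrite Hy1, Hx1; reflexivity.
        -- rewrite Hx2, Hy2; reflexivity.
      * intro o; split; intros; cbn.
        -- reflexivity.
        -- apply weval_ext; auto.
  - intros e He v. destruct He; split; intros; cbn.
    + reflexivity.
    + apply (gA HA).
    + reflexivity.
    + apply (g0r HA).
    + reflexivity.
    + apply (g0l HA).
    + exact (ddot_inv HA _ ws true a).
    + apply (gNr HA).
    + exact (ddot_inv HA _ ws false a).
    + apply (gNl HA).
    + reflexivity.
    + apply (weval_distr HA); intros; try apply (dstar_central HA). apply (dstar_add HA).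
    + reflexivity.
    + reflexivity.
    + reflexivity.
    + reflexivity.
Qed.
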